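(* Let $n\ge 2$ be an integer and let $E$ be a nonsingular generalized Weierstrass elliptic curve over $\mathbb{Z}_n$. Then the number of (distinct) generalized Weierstrass elliptic curves over $\mathbb{Z}_n$ isomorphic to $E$ is $\frac{\Phi(n^4)}{|\mathrm{Aut}(E)|}$, where $\Phi$ is Euler's totient function.
   Context: A generalized Weierstrass curve over $\mathbb{Z}_n$ is $E: y^2+a_1xy+a_3y=x^3+a_2x^2+a_4x+a_6$ with $(a_1,a_2,a_3,a_4,a_6)\in\mathbb{Z}_n^5$ (distinct tuples give distinct curves). With $b_2=a_1^2+4a_2$, $b_4=2a_4+a_1a_3$, $b_6=a_3^2+4a_6$, $b_8=a_1^2a_6+4a_2a_6-a_1a_3a_4+a_2a_3^2-a_4^2$, its discriminant is $\Delta=-b_2^2b_8-8b_4^3-27b_6^2+9b_2b_4b_6$, and $E$ is nonsingular iff $\Delta\in\mathbb{Z}_n^*$. For $u\in\mathbb{Z}_n^*$ and $r,s,t\in\mathbb{Z}_n$, the change of variables $x=u^2x'+r$, $y=u^3y'+u^2sx'+t$ transforms $E$ into the curve with coefficients $a_i'$ determined by $ua_1'=a_1+2s$, $u^2a_2'=a_2-sa_1+3r-s^2$, $u^3a_3'=a_3+ra_1+2t$, $u^4a_4'=a_4-sa_3+2ra_2-(t+rs)a_1+3r^2-2st$, $u^6a_6'=a_6+ra_4+r^2a_2+r^3-ta_3-t^2-rta_1$. Two generalized curves are isomorphic if one is obtained from the other by such a transformation. $\mathrm{Aut}(E)$ is the set of such transformations (parametrized by $(u,r,s,t)\in\mathbb{Z}_n^*\times\mathbb{Z}_n^3$)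 mapping $E$ to itself. *)

(* Defs.v *)
From mathcomp Require Import all_boot all_order all_algebra.
Set Implicit Arguments. Unset Strict Implicit. Unset Printing Implicit Defensive.
Import GRing.Theory.
Local Open Scope ring_scope.

Definition wcurve (n : nat) := ('Z_n * 'Z_n * 'Z_n * 'Z_n * 'Z_n)%type.

Section W.
Variable n : nat.
Implicit Types E : wcurve n.

Definition a1 E := E.1.1.1.1.
Definition a2 E := E.1.1.1.2.
Definition a3 E := E.1.1.2.
Definition a4 E := E.1.2.
Definition a6 E := E.2.

Definition b2 E : 'Z_n := a1 E ^+ 2 + 4 * a2 E.
Definition b4 E : 'Z_n := 2 * a4 E + a1 E * a3 E.
Definition b6 E : 'Z_n := a3 E ^+ 2 + 4 * a6 E.
Definition b8 E : 'Z_n :=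
  a1 E ^+ 2 * a6 E + 4 * a2 E * a6 E - a1 E * a3 E * a4 E
  + a2 E * a3 E ^+ 2 - a4 E ^+ 2.

Definition disc E : 'Z_n :=
  - b2 E ^+ 2 * b8 E - 8 * b4 E ^+ 3 - 27 * b6 E ^+ 2 + 9 * b2 E * b4 E * b6 E.

Definition nonsingular E : bool := disc E \is a GRing.unit.

(* The curve obtained from E by the change of variables
   x = u^2 x' + r, y = u^3 y' + u^2 s x' + t  (u a unit). *)
Definition wtransform (u r s t : 'Z_n) E : wcurve n :=
  let a1 := a1 E in let a2 := a2 E in let a3 := a3 E in
  let a4 := a4 E in let a6 := a6 E in
  (u^-1 * (a1 + 2 * s),
   u^-1 ^+ 2 * (a2 - s * a1 + 3 * r - s ^+ 2),
   u^-1 ^+ 3 * (a3 + r * a1 + 2 * t),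
   u^-1 ^+ 4 * (a4 - s * a3 + 2 * r * a2 - (t + r * s) * a1 + 3 * r ^+ 2 - 2 * s * t),
   u^-1 ^+ 6 * (a6 + r * a4 + r ^+ 2 * a2 + r ^+ 3 - t * a3 - t ^+ 2 - r * t * a1)).

Definition wiso E E' : bool :=
  [exists p : 'Z_n * 'Z_n * 'Z_n * 'Z_n,
     (p.1.1.1 \is a GRing.unit) && (wtransform p.1.1.1 p.1.1.2 p.1.2 p.2 E == E')].

Definition Aut E : {set 'Z_n * 'Z_n * 'Z_n * 'Z_n} :=
  [set p | (p.1.1.1 \is a GRing.unit) && (wtransform p.1.1.1 p.1.1.2 p.1.2 p.2 E == E)].

End W.

(* Main.v *)
Require Import Defs.
From mathcomp Require Import all_boot all_order all_algebra.
From mathcomp Require Import ring zify.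

Section Helpers.
Import GRing.Theory.
Local Open Scope ring_scope.
Variable n : nat.

Lemma wt_comp (u1 u2 r1 s1 t1 R S T : 'Z_n) (E : wcurve n) :
  u1 \is a GRing.unit -> u2 \is a GRing.unit ->
  wtransform u2 (u1^-1 ^+ 2 * R) (u1^-1 * S) (u1^-1 ^+ 3 * T) (wtransform u1 r1 s1 t1 E)
  = wtransform (u1 * u2) (r1 + R) (s1 + S) (t1 + s1 * R + T) E.
Proof.
move=> U1 U2; case: E => [[[[e1 e2] e3] e4] e6].
rewrite /wtransform /a1 /a2 /a3 /a4 /a6 /= invrM //.
move: (u1^-1) (u2^-1) => w1 w2.
congr (_, _, _, _, _); ring.
Qed.

Lemma wt_id (E : wcurve n) : wtransform 1 0 0 0 E = E.
Proof.
case: E => [[[[e1 e2] e3] e4] e6].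
rewrite /wtransform /a1 /a2 /a3 /a4 /a6 /= invr1.
congr (_, _, _, _, _); ring.
Qed.

Definition par := ('Z_n * 'Z_n * 'Z_n * 'Z_n)%type.

Definition wt (p : par) (E : wcurve n) := wtransform p.1.1.1 p.1.1.2 p.1.2 p.2 E.

Definition comp (a q : par) : par :=
  (a.1.1.1 * q.1.1.1, a.1.1.2 + a.1.1.1 ^+ 2 * q.1.1.2, a.1.2 + a.1.1.1 * q.1.2,
   a.2 + a.1.2 * (a.1.1.1 ^+ 2 * q.1.1.2) + a.1.1.1 ^+ 3 * q.2).

Lemma wt_compP (a q : par) E :
  a.1.1.1 \is a GRing.unit -> q.1.1.1 \is a GRing.unit ->
  wt (comp a q) E = wt q (wt a E).
Proof.
case: a => [[[ua ra] sa] ta]; case: q => [[[uq rq] sq] tq] /= Ua Uq.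
rewrite /wt /comp /= -wt_comp //.
have h k x : (ua^-1 ^+ k * (ua ^+ k * x)) = x.
  by rewrite mulrA -exprMn mulVr // expr1n mul1r.
by rewrite h -[ua^-1 * _]/(ua^-1 ^+ 1 * (ua ^+ 1 * sq)) h h.
Qed.

Lemma wt_inj (q : par) X Y : q.1.1.1 \is a GRing.unit -> wt q X = wt q Y -> X = Y.
Proof.
case: q => [[[uq rq] sq] tq] /= Uq.
have K Z : wtransform uq^-1 (uq^-1^+2 * - rq) (uq^-1 * - sq) (uq^-1^+3 * (sq*rq - tq))
             (wtransform uq rq sq tq Z) = Z.
  rewrite wt_comp ?unitrV // mulrV // !subrr.
  have -> : tq + sq * - rq + (sq * rq - tq) = 0 by ring.
  exact: wt_id.
by rewrite /wt /= => H; rewrite -(K X) H K.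
Qed.

Lemma fiber_card (E : wcurve n) (q : par) : q.1.1.1 \is a GRing.unit ->
  #|[set p : par | (p.1.1.1 \is a GRing.unit) && (wt p E == wt q E)]| = #|Aut E|.
Proof.
move=> Uq.
have -> : [set p : par | (p.1.1.1 \is a GRing.unit) && (wt p E == wt q E)]
          = (fun a => comp a q) @: Aut E.
  apply/setP => p; rewrite inE; apply/idP/imsetP.
  - case/andP => Up /eqP fp.
    case: p Up fp => [[[up rp] sp] tp] /= Up fp.
    set ua := up / q.1.1.1.
    have Ua : ua \is a GRing.unit by rewrite unitrM Up unitrV.
    pose a : par := (ua, rp - ua ^+ 2 * q.1.1.2, sp - ua * q.1.2,
       tp - (sp - ua * q.1.2) * (ua ^+ 2 * q.1.1.2) - ua ^+ 3 * q.2).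
    have ca : comp a q = (up, rp, sp, tp).
      rewrite /comp /a /=; congr (_, _, _, _).
      - by rewrite /ua divrK.
      - by rewrite subrK.
      - by rewrite subrK.
      - by ring.
    exists a; last by rewrite ca.
    rewrite inE Ua /=; apply/eqP; apply: (@wt_inj q _ _ Uq).
    by rewrite -fp -ca wt_compP.
  - case=> a; rewrite inE => /andP [Ua /eqP Ha] ->.
    rewrite unitrM Ua Uq /= wt_compP //.
    by rewrite /wt Ha.
apply: card_in_imset => a b; rewrite !inE => /andP [Ua _] /andP [Ub _].
case: a Ua => [[[ua ra] sa] ta]; case: b Ub => [[[ub rb] sb] tb] Ub Ua H.
have Hu : ua * q.1.1.1 = ub * q.1.1.1 := congr1 (fun x : par => x.1.1.1) H.
have Hr : ra + ua ^+ 2 * q.1.1.2 = rb + ub ^+ 2 * q.1.1.2 := congr1 (fun x : par => x.1.1.2) H.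
have Hs : sa + ua * q.1.2 = sb + ub * q.1.2 := congr1 (fun x : par => x.1.2) H.
have Ht : ta + sa * (ua ^+ 2 * q.1.1.2) + ua ^+ 3 * q.2
        = tb + sb * (ub ^+ 2 * q.1.1.2) + ub ^+ 3 * q.2 := congr1 (fun x : par => x.2) H.
have eu : ua = ub := mulIr Uq Hu.
subst ub.
have er := addIr _ Hr. have es := addIr _ Hs. subst rb sb.
by rewrite (addIr _ (addIr _ Ht)).
Qed.

Lemma card_units : (1 < n)%N -> #|[set x : 'Z_n | x \is a GRing.unit]| = totient n.
Proof.
move=> hn; rewrite -card_units_Zp; last by apply: ltnW.
by rewrite cardsT card_sub cardsE.
Qed.

Lemma card_Zn : (1 < n)%N -> #|'Z_n| = n.
Proof. by move=> hn; rewrite card_ord Zp_cast. Qed.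

End Helpers.

Lemma totient_pow4 m : 0 < m -> totient (m ^ 4) = m ^ 3 * totient m.
Proof.
move=> m0; rewrite !totientE ?expn_gt0 ?m0 // primesX //.
have hm : m = \prod_(p <- primes m) p ^ logn p m.
  by rewrite {1}(prod_prime_decomp m0) prime_decompE big_map.
rewrite big_seq [in RHS]big_seq.
rewrite (eq_bigr (fun p => (p.-1 * p ^ (logn p m).-1) * (p ^ logn p m * p ^ logn p m * p ^ logn p m))); last first.
  move=> p pm; rewrite lognX -!expnD -mulnA -expnD; congr (_ * _ ^ _).
  move: pm; rewrite -logn_gt0; lia.
rewrite big_split /= mulnC; congr (_ * _).
rewrite !big_split /= -!big_seq -hm; lia.
Qed.

Theorem theorem11 (n : nat) (hn : (1 < n)%N) (E : wcurve n) :
  nonsingular E ->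
  #|[set E' : wcurve n | wiso E E']| = (totient (n ^ 4) %/ #|Aut E|)%N.
Proof.
move=> _.
set O := [set E' : wcurve n | wiso E E'].
set U := [set p : par n | p.1.1.1 \is a GRing.unit].
have AutP : (0 < #|Aut E|)%N.
  apply/card_gt0P; exists (1, 0, 0, 0)%R.
  by rewrite inE /= GRing.unitr1 wt_id eqxx.
have cU : #|U| = (#|O| * #|Aut E|)%N.
  rewrite -sum1_card (partition_big (fun p : par n => @wt n p E) (fun E' => E' \in O)); last first.
    by move=> p; rewrite inE => Up /=; rewrite /O /wiso inE; apply/existsP; exists p; rewrite Up eqxx.
  rewrite -sum_nat_const; apply: eq_bigr => E' /=; rewrite /O /wiso inE => /existsP [q /andP [Uq /eqP hq]].
  rewrite sum1_card -(@fiber_card n E q Uq); apply: eq_card => p.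
  by rewrite unfold_in /= !inE -hq.
have -> : totient (n ^ 4) = #|U|.
  have -> : U = setX (setX (setX [set x : 'Z_n | x \is a GRing.unit] setT) setT) setT.
    by apply/setP => [[[[u r] s] t]]; rewrite !inE /= !andbT.
  rewrite !cardsX !cardsT card_units // card_Zn // totient_pow4; last by lia.
  lia.
by rewrite cU mulnK.
Qed.
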